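(* Let $m,n\geq 2$ be integers with $m\mid n$. Let $E_n=(A^{(n)}\#C_n)/(e_0)$ and $E_m=(A^{(m)}\#C_m)/(e_0)$. Then $\operatorname{GKdim}E_n\geq\operatorname{GKdim}E_m$; equivalently $n-\mathrm{p}(A^{(n)},C_n)\geq m-\mathrm{p}(A^{(m)},C_m)$.
   Context: $\Bbbk$ is an algebraically closed field of characteristic zero. For $k\ge2$, $A^{(k)}=\Bbbk_{-1}[x_0,\dots,x_{k-1}]$ is the algebra generated by degree-one $x_0,\dots,x_{k-1}$ with $x_ix_j=-x_jx_i$ ($i\ne j$), with the cyclic group $C_k=\langle\sigma\rangle$ acting by $\sigma(x_i)=x_{i+1}$ (indices in $\mathbb{Z}_k$). In the skew group algebra $A^{(k)}\#C_k$, $e_0=1\#\frac1k\sum_{g\in C_k}g$ and $(e_0)$ is the two-sided ideal it generates; $\mathrm{p}(A^{(k)},C_k)=k-\operatorname{GKdim}\big((A^{(k)}\#C_k)/(e_0)\big)$. *)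

(* Defs.v *)
From HB Require Import structures.
From mathcomp Require Import all_boot all_order all_algebra.
Set Implicit Arguments. Unset Strict Implicit. Unset Printing Implicit Defensive.
Import GRing.Theory.
Local Open Scope ring_scope.

(* The algebra E_k = (A^(k) # C_k)/(e_0) is realised by its presentation as a
   quotient of the free associative K-algebra K<x_0,...,x_{k-1}, s>
   (s = 1#sigma) by the two-sided ideal generated by
     x_i x_j + x_j x_i (i <> j)        [relations of A^(k) = K_{-1}[x]]
     s^k - 1                            [C_k = <sigma>, sigma^k = 1]
     s x_i - x_{i+1} s                  [(1#sigma)(x_i#1) = sigma(x_i)#sigma]
     e_0 = (1/k) sum_{j<k} s^j          [the idempotent e_0]
   Elements of the free algebra are formal finite sums: lists of
   (coefficient, word); two formal sums denote the same element iff all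
   word-coefficients agree (fequiv). *)

Section FreeAlg.
Variable K : fieldType.
Variable k : nat.

Definition letter := option 'I_k.          (* Some i = x_i, None = s *)
Definition word := seq letter.
Definition falg := seq (K * word).

Definition fcoef (f : falg) (w : word) : K := \sum_(p <- f | p.2 == w) p.1.
Definition fequiv (f g : falg) : Prop := forall w, fcoef f w = fcoef g w.

Definition fadd (f g : falg) : falg := f ++ g.
Definition fscale (c : K) (f : falg) : falg := [seq (c * p.1, p.2) | p <- f].
Definition fsub (f g : falg) : falg := fadd f (fscale (-1) g).
Definition fmul (f g : falg) : falg :=
  [seq (p.1 * q.1, p.2 ++ q.2) | p <- f, q <- g].
Definition fsum (fs : seq falg) : falg := flatten fs.
Definition fword (w : word) : falg := [:: (1, w)].
Definition fone : falg := fword [::].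
Definition gen_x (i : 'I_k) : falg := fword [:: Some i].
Definition gen_s : falg := fword [:: None].

Definition anticomm_rels : seq falg :=
  [seq fadd (fmul (gen_x ij.1) (gen_x ij.2)) (fmul (gen_x ij.2) (gen_x ij.1))
  | ij <- [seq (i, j) | i <- enum 'I_k, j <- enum 'I_k] & ij.1 != ij.2].
Definition group_rel : falg := fsub (fword (nseq k None)) fone.
Definition conj_rels : seq falg :=
  [seq fsub (fmul gen_s (gen_x i)) (fmul (gen_x (ordS i)) gen_s) | i <- enum 'I_k].
Definition skew_rels : seq falg := group_rel :: anticomm_rels ++ conj_rels.

Definition e0 : falg :=
  fscale (k%:R^-1) (fsum [seq fword (nseq j None) | j <- iota 0 k]).

Definition E_rels : seq falg := e0 :: skew_rels.

Definition in_ideal (rels : seq falg) (f : falg) : Prop :=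
  exists ts : seq (falg * falg * falg),
    all (fun t => t.1.2 \in rels) ts /\
    fequiv f (fsum [seq fmul (fmul t.1.1 t.1.2) t.2 | t <- ts]).

(* f in V^N, where V = span(1, x_0, ..., x_{k-1}, s) is the standard
   finite-dimensional generating subspace *)
Definition in_VN (N : nat) (f : falg) : bool := all (fun p => size p.2 <= N)%N f.

Definition dim_ge (N d : nat) : Prop :=
  exists fs : 'I_d -> falg, (forall i, in_VN N (fs i)) /\
    forall c : 'I_d -> K,
      in_ideal E_rels (fsum [seq fscale (c i) (fs i) | i <- enum 'I_d]) ->
      forall i, c i = 0.

(* "d_N <= N^(p/q) for all large N", with d_N = dim(image of V^N in E_k) *)
Definition gk_bound (p q : nat) : Prop :=
  exists N0, forall N, (N0 <= N)%N -> forall d, dim_ge N d -> (d ^ q <= N ^ p)%N.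

End FreeAlg.

(* GKdim E = limsup log d_N / log N = inf { r >= 0 : d_N <= N^r eventually },
   the inf being taken (equivalently) over nonnegative rationals r = p/q.
   gk_le K m n  :<->  GKdim E_m <= GKdim E_n  (inf of the bound sets, with
   inf of the empty set = +infinity): every rational strictly above a bound
   for E_n is a bound for E_m. *)
Definition gk_le (K : fieldType) (m n : nat) : Prop :=
  forall p q, (0 < q)%N -> gk_bound K n p q ->
  forall p' q', (0 < q')%N -> (p * q' < p' * q)%N -> gk_bound K m p' q'.

(* Main.v *)
Require Import Defs.
From HB Require Import structures.
From mathcomp Require Import all_boot all_order all_algebra all_field.
From mathcomp Require Import zify.
Set Implicit Arguments. Unset Strict Implicit. Unset Printing Implicit Defensive.
Import GRing.Theory.
Local Open Scope ring_scope.

Section Gen.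
Variable K : fieldType.
Variable k : nat.
Implicit Types f g h : falg K k.

Definition ev (F : word k -> K) (f : falg K k) : K := \sum_(p <- f) p.1 * F p.2.

Lemma ev_nil F : ev F [::] = 0.
Proof. by rewrite /ev big_nil. Qed.

Lemma ev_cons F p f : ev F (p :: f) = p.1 * F p.2 + ev F f.
Proof. by rewrite /ev big_cons. Qed.

Lemma ev_cat F f g : ev F (f ++ g) = ev F f + ev F g.
Proof. by rewrite /ev big_cat. Qed.

Lemma ev_add F f g : ev F (fadd f g) = ev F f + ev F g.
Proof. exact: ev_cat. Qed.

Lemma ev_scale F c f : ev F (fscale c f) = c * ev F f.
Proof.
rewrite /ev /fscale big_map mulr_sumr; apply: eq_bigr => p _ /=.
by rewrite mulrA.
Qed.

Lemma ev_sub F f g : ev F (fsub f g) = ev F f - ev F g.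
Proof. by rewrite /fsub ev_add ev_scale mulN1r. Qed.

Lemma ev_mul F f g : ev F (fmul f g) = ev (fun u => ev (fun v => F (u ++ v)) g) f.
Proof.
rewrite /ev /fmul big_allpairs_dep /=; apply: eq_bigr => p _.
rewrite mulr_sumr; apply: eq_bigr => q _ /=. by rewrite mulrA.
Qed.

Lemma ev_fsum F L : ev F (fsum L) = \sum_(x <- L) ev F x.
Proof.
elim: L => [|x L IH]; first by rewrite big_nil /fsum /= ev_nil.
by rewrite big_cons /fsum /= ev_cat -IH.
Qed.

Lemma ev_word F w : ev F (fword K w) = F w.
Proof. by rewrite /ev /fword big_seq1 mul1r. Qed.

Lemma ev_ext F F' f : (forall w, F w = F' w) -> ev F f = ev F' f.
Proof. by move=> E; rewrite /ev; apply: eq_bigr => p _; rewrite E. Qed.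

Lemma ev_sumF (I : Type) (s : seq I) (H : I -> word k -> K) f :
  ev (fun w => \sum_(i <- s) H i w) f = \sum_(i <- s) ev (H i) f.
Proof.
rewrite /ev exchange_big /=; apply: eq_bigr => p _; by rewrite mulr_sumr.
Qed.

Lemma ev_scaleF c F f : ev (fun w => c * F w) f = c * ev F f.
Proof.
rewrite /ev mulr_sumr; apply: eq_bigr => p _; by rewrite mulrCA.
Qed.

Lemma ev0F f : ev (fun _ => 0) f = 0.
Proof. by rewrite /ev big1 // => p _; rewrite mulr0. Qed.

Lemma fcoef_ev f w : fcoef f w = ev (fun v => (v == w)%:R) f.
Proof.
rewrite /fcoef /ev big_mkcond; apply: eq_bigr => p _ /=.
by case: eqP => _; rewrite ?mulr1 ?mulr0.
Qed.

Lemma sum_if_eq (T : eqType) (s : seq T) (x : T) (F : T -> K) :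
  uniq s -> x \in s -> \sum_(y <- s) (if x == y then F y else 0) = F x.
Proof.
elim: s => [//|y s IH] /= /andP [ny us]; rewrite inE big_cons.
case: eqP => [xy _|ne /= xs].
  rewrite -xy big1_seq ?addr0 // => z /= zs; case: ifP => // /eqP xz.
  by move: ny; rewrite -xy xz zs.
by rewrite IH // add0r.
Qed.

Lemma ev_decomp F f (ws : seq (word k)) : uniq ws ->
  {subset [seq p.2 | p <- f] <= ws} ->
  ev F f = \sum_(w <- ws) fcoef f w * F w.
Proof.
move=> uws; elim: f => [|p f IH] sub.
  by rewrite ev_nil big1 // => w _; rewrite /fcoef big_nil mul0r.
rewrite ev_cons IH; last by move=> w wf; apply: sub; rewrite inE wf orbT.
have pin : p.2 \in ws by apply: sub; rewrite inE eqxx.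
rewrite -(sum_if_eq (fun w => p.1 * F w) uws pin) -big_split /=.
apply: eq_bigr => w _; rewrite /fcoef big_cons.
by case: ifP => _; rewrite ?mulrDl ?add0r.
Qed.

Lemma fequivP f g : fequiv f g <-> forall F, ev F f = ev F g.
Proof.
split=> [E F|E w]; last by rewrite !fcoef_ev E.
set ws := undup [seq p.2 | p <- f ++ g].
have uws : uniq ws := undup_uniq _.
rewrite (@ev_decomp F f ws) ?(@ev_decomp F g ws) //.
- by apply: eq_bigr => w _; rewrite E.
- by move=> w wg; rewrite mem_undup map_cat mem_cat wg orbT.
- by move=> w wf; rewrite mem_undup map_cat mem_cat wf.
Qed.

Lemma fequiv_refl f : fequiv f f. Proof. by []. Qed.
Lemma fequiv_sym f g : fequiv f g -> fequiv g f. Proof. by move=> E w. Qed.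
Lemma fequiv_trans f g h : fequiv f g -> fequiv g h -> fequiv f h.
Proof. by move=> E1 E2 w; rewrite E1. Qed.

Definition IS (t : falg K k * falg K k * falg K k) := fmul (fmul t.1.1 t.1.2) t.2.

Variable rels : seq (falg K k).

Lemma in_idealP f : in_ideal rels f <->
  exists ts, all (fun t => t.1.2 \in rels) ts /\
     forall F, ev F f = \sum_(t <- ts) ev F (IS t).
Proof.
split=> [[ts [al E]]|[ts [al E]]]; exists ts; split => //.
  by move=> F; move/fequivP: E => ->; rewrite ev_fsum big_map.
by apply/fequivP => F; rewrite E ev_fsum big_map.
Qed.

Lemma in_ideal_equiv f g : fequiv f g -> in_ideal rels g -> in_ideal rels f.
Proof. by move=> E [ts [al E']]; exists ts; split=> //; apply: fequiv_trans E'. Qed.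

Lemma in_ideal_nil : in_ideal rels [::].
Proof. by exists [::]. Qed.

Lemma in_ideal_add f g : in_ideal rels f -> in_ideal rels g -> in_ideal rels (f ++ g).
Proof.
move=> /in_idealP [ts [al E]] /in_idealP [ts' [al' E']].
apply/in_idealP; exists (ts ++ ts'); split; first by rewrite all_cat al al'.
by move=> F; rewrite ev_cat E E' big_cat.
Qed.

Lemma in_ideal_fsum L : (forall x, x \in L -> in_ideal rels x) -> in_ideal rels (fsum L).
Proof.
elim: L => [_|x L IH H]; first exact: in_ideal_nil.
rewrite /fsum /=; apply: in_ideal_add; first by apply: H; rewrite inE eqxx.
by apply: IH => y yL; apply: H; rewrite inE yL orbT.
Qed.

Lemma in_ideal_scale c f : in_ideal rels f -> in_ideal rels (fscale c f).
Proof.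
move=> /in_idealP [ts [al E]]; apply/in_idealP.
exists [seq (fscale c t.1.1, t.1.2, t.2) | t <- ts]; split.
  by rewrite all_map.
move=> F; rewrite ev_scale E big_map mulr_sumr; apply: eq_bigr => t _.
rewrite /IS /= !ev_mul ev_scale; done.
Qed.

Lemma ev_mulA F x y z : ev F (fmul (fmul x y) z) = ev F (fmul x (fmul y z)).
Proof.
rewrite ev_mul ev_mul [RHS]ev_mul; apply: ev_ext => u.
rewrite ev_mul; apply: ev_ext => v; apply: ev_ext => w; by rewrite catA.
Qed.

Lemma ev_mul_congr_r F h X Y : (forall F, ev F X = ev F Y) ->
  ev F (fmul h X) = ev F (fmul h Y).
Proof. by move=> E; rewrite !ev_mul; apply: ev_ext => u; apply: E. Qed.

Lemma ev_mul_congr_l F h X Y : (forall F, ev F X = ev F Y) ->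
  ev F (fmul X h) = ev F (fmul Y h).
Proof. by move=> E; rewrite !ev_mul; apply: E. Qed.

Lemma in_ideal_lmul h f : in_ideal rels f -> in_ideal rels (fmul h f).
Proof.
move=> /in_idealP [ts [al E]]; apply/in_idealP.
exists [seq (fmul h t.1.1, t.1.2, t.2) | t <- ts]; split.
  by rewrite all_map.
move=> F; rewrite ev_mul (ev_ext _ (fun u => E _)) ev_sumF big_map.
apply: eq_bigr => t _; rewrite -ev_mul /IS /=.
rewrite ev_mulA ev_mulA; apply: ev_mul_congr_r => F'.
by rewrite ev_mulA.
Qed.

Lemma in_ideal_rmul h f : in_ideal rels f -> in_ideal rels (fmul f h).
Proof.
move=> /in_idealP [ts [al E]]; apply/in_idealP.
exists [seq (t.1.1, t.1.2, fmul t.2 h) | t <- ts]; split.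
  by rewrite all_map.
move=> F; rewrite ev_mul E big_map.
apply: eq_bigr => t _; rewrite -ev_mul /IS /=.
by rewrite ev_mulA.
Qed.

Lemma in_ideal_rel r : r \in rels -> in_ideal rels r.
Proof.
move=> rin; apply/in_idealP; exists [:: (fone K k, r, fone K k)]; split.
  by rewrite /= rin.
move=> F; rewrite big_seq1 /IS /= !ev_mul /fone ev_word.
by apply: ev_ext => w; rewrite ev_word cats0.
Qed.

End Gen.

Section Spec.
Variable K : fieldType.
Variables m r : nat.
Hypothesis hm : (0 < m)%N.
Hypothesis hr : (0 < r)%N.
Local Notation n := (r * m)%N.

Definition ord_m (j : nat) : 'I_m := Ordinal (ltn_pmod j hm).
Definition ai (i : 'I_n) : 'I_m := ord_m (i %/ r).

Definition step (b : nat) (l : letter n) : option (nat * word m) :=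
  match l with
  | Some i => if (i %% r == b)%N then Some (b, [:: Some (ai i)]) else None
  | None => if b is b1.+1 then Some (b1, [::]) else Some (r.-1, [:: None])
  end.

Fixpoint run (b : nat) (w : word n) : option (nat * word m) :=
  match w with
  | [::] => Some (b, [::])
  | l :: w' =>
    match step b l with
    | Some (b1, u1) =>
      match run b1 w' with Some (b2, u2) => Some (b2, u1 ++ u2) | None => None end
    | None => None
    end
  end.

Definition G b b' (F : word m -> K) (w : word n) : K :=
  match run b w with Some (b2, u) => if (b2 == b')%N then F u else 0 | None => 0 end.

Definition isgood b b' (w : word n) :=
  match run b w with Some (b2, _) => (b2 == b')%N | None => false end.

Definition tr b b' (f : falg K n) : falg K m :=
  [seq (p.1, odflt [::] (omap snd (run b p.2))) | p <- f & isgood b b' p.2].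

Lemma ev_tr F b b' f : ev F (tr b b' f) = ev (G b b' F) f.
Proof.
rewrite /ev /tr big_map big_filter big_mkcond; apply: eq_bigr => p _ /=.
rewrite /isgood /G; case: (run b p.2) => [[b2 u]|] /=; last by rewrite mulr0.
by case: eqP; rewrite ?mulr0.
Qed.

Lemma G_ext b b' F F' w : (forall x, F x = F' x) -> G b b' F w = G b b' F' w.
Proof. by move=> E; rewrite /G; case: (run b w) => [[b2 u]|] //; rewrite E. Qed.

Lemma step_lt b l b1 u1 : (b < r)%N -> step b l = Some (b1, u1) -> (b1 < r)%N.
Proof.
case: l => [i|] /=; first by case: eqP => // _ lt [<- _].
case: b => [|b] lt [<- _]; first by rewrite prednK // leqnn.
exact: ltnW.
Qed.

Lemma run_lt b w b2 u : (b < r)%N -> run b w = Some (b2, u) -> (b2 < r)%N.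
Proof.
elim: w b b2 u => [|l w IH] b b2 u lt /=; first by case=> <-.
case E: (step b l) => [[b1 u1]|] //.
case E2: (run b1 w) => [[b3 u3]|] // [<- _].
exact: (IH b1 b3 u3 (step_lt lt E) E2).
Qed.

Lemma run_cat b u v : run b (u ++ v) =
  match run b u with
  | Some (b1, u1) =>
    match run b1 v with Some (b2, u2) => Some (b2, u1 ++ u2) | None => None end
  | None => None
  end.
Proof.
elim: u b => [|l u IH] b /=; first by case: (run b v) => [[]|].
case: (step b l) => [[b1 u1]|] //; rewrite IH.
case: (run b1 u) => [[b2 u2]|] //; case: (run b2 v) => [[b3 u3]|] //.
by rewrite catA.
Qed.

Lemma G_catS b b' F u v b1 u1 : run b u = Some (b1, u1) ->
  G b b' F (u ++ v) = G b1 b' (fun x => F (u1 ++ x)) v.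
Proof. by move=> E; rewrite /G run_cat E; case: (run b1 v) => [[]|]. Qed.

Lemma G_catN b b' F u v : run b u = None -> G b b' F (u ++ v) = 0.
Proof. by move=> E; rewrite /G run_cat E. Qed.

Lemma tr_mul b b'' f g F : (b < r)%N ->
  ev F (tr b b'' (fmul f g)) =
  ev F (fsum [seq fmul (tr b b' f) (tr b' b'' g) | b' <- iota 0 r]).
Proof.
move=> lt; rewrite ev_tr ev_fsum big_map.
transitivity (\sum_(b' <- iota 0 r)
   ev (G b b' (fun u => ev (G b' b'' (fun v => F (u ++ v))) g)) f); last first.
  apply: eq_bigr => b' _; rewrite ev_mul ev_tr; apply: ev_ext => w.
  by apply: G_ext => x; rewrite ev_tr.
rewrite -ev_sumF ev_mul; apply: ev_ext => u.
case E: (run b u) => [[b1 u1]|].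
  rewrite (ev_ext _ (fun v => G_catS b'' F v E)).
  have lt1 := run_lt lt E.
  rewrite /G E.
  rewrite (@sum_if_eq K _ _ b1 (fun y => ev (G y b'' (fun v => F (u1 ++ v))) g)).
  - by [].
  - exact: iota_uniq.
  - by rewrite mem_iota add0n.
rewrite (ev_ext _ (fun v => G_catN b'' F v E)) ev0F.
by rewrite big1 // => b' _; rewrite /G E.
Qed.

Definition Zp (g : falg K n) := forall b b', (b < r)%N -> in_ideal (E_rels K m) (tr b b' g).

Lemma Z_equiv g g' : fequiv g g' -> Zp g' -> Zp g.
Proof.
move=> /fequivP E Z b b' lt; apply: in_ideal_equiv (Z b b' lt).
by apply/fequivP => F; rewrite !ev_tr E.
Qed.

Lemma Z_fsum L : (forall x, x \in L -> Zp x) -> Zp (fsum L).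
Proof.
move=> H b b' lt.
apply: (@in_ideal_equiv _ _ _ _ (fsum [seq tr b b' x | x <- L])).
  by apply/fequivP => F; rewrite ev_tr !ev_fsum big_map; apply: eq_bigr => x _; rewrite ev_tr.
by apply: in_ideal_fsum => y /mapP [x xL ->]; apply: H.
Qed.

Lemma Z_lmul h g : Zp g -> Zp (fmul h g).
Proof.
move=> Z b b' lt; apply: in_ideal_equiv; first by apply/fequivP => F; apply: tr_mul.
apply: in_ideal_fsum => y /mapP [b0 b0in ->]; apply: in_ideal_lmul; apply: Z.
by move: b0in; rewrite mem_iota add0n.
Qed.

Lemma Z_rmul h g : Zp g -> Zp (fmul g h).
Proof.
move=> Z b b' lt; apply: in_ideal_equiv; first by apply/fequivP => F; apply: tr_mul.
by apply: in_ideal_fsum => y /mapP [b0 b0in ->]; apply: in_ideal_rmul; apply: Z.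
Qed.

Lemma run_nseq_le j b : (j <= b)%N -> run b (nseq j None) = Some ((b - j)%N, [::]).
Proof.
elim: j b => [|j IH] b le /=; first by rewrite subn0.
case: b le => [//|b] le /=; by rewrite IH.
Qed.

Lemma run_nseq_r b : (b < r)%N -> run b (nseq r None) = Some (b, [:: None]).
Proof.
move=> lt.
have E : nseq r (None : letter n) = nseq b None ++ nseq (r - b.+1)%N.+1 None.
  by rewrite -nseqD subnSK // subnKC // ltnW.
rewrite E run_cat run_nseq_le // subnn /= run_nseq_le; last by lia.
by congr (Some (_, _)); lia.
Qed.

Lemma run_nseq_mul b a : (b < r)%N -> run b (nseq (a * r)%N None) = Some (b, nseq a None).
Proof.
move=> lt; elim: a => [|a IH]; first by rewrite mul0n.
by rewrite mulSn nseqD run_cat run_nseq_r // IH.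
Qed.

Lemma nseq_n : nseq n (None : letter n) = nseq (m * r)%N None.
Proof. exact: (congr1 (fun k => nseq k None) (mulnC r m)). Qed.

Lemma Z_group b b' : (b < r)%N -> in_ideal (E_rels K m) (tr b b' (group_rel K n)).
Proof.
move=> lt; case: (eqVneq b b') => [<-|ne].
  apply: (@in_ideal_equiv _ _ _ _ (group_rel K m)).
    apply/fequivP => F; rewrite ev_tr /group_rel !ev_sub /fone !ev_word.
    by rewrite /G nseq_n run_nseq_mul //= eqxx.
  by apply: in_ideal_rel; rewrite /E_rels /skew_rels !inE eqxx orbT.
apply: (@in_ideal_equiv _ _ _ _ [::]); last exact: in_ideal_nil.
apply/fequivP => F; rewrite ev_tr /group_rel !ev_sub /fone !ev_word ev_nil.
by rewrite /G nseq_n run_nseq_mul //= (negPf ne) subrr.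
Qed.

Lemma sum_iota_mul (H : nat -> K) M :
  \sum_(j <- iota 0 (r * M)%N) H j = \sum_(a <- iota 0 M) \sum_(c <- iota 0 r) H (a * r + c)%N.
Proof.
elim: M => [|M IH]; first by rewrite muln0 !big_nil.
rewrite mulnS addnC iotaD big_cat IH -addn1 iotaD big_cat big_seq1 /=.
congr (_ + _); rewrite !add0n -{1}(addn0 (r * M)%N) iotaDl big_map.
by apply: eq_bigr => c _; rewrite mulnC.
Qed.

Lemma ev_e0 k H : ev H (e0 K k) = k%:R^-1 * \sum_(a <- iota 0 k) H (nseq a None).
Proof.
rewrite /e0 ev_scale ev_fsum big_map; congr (_ * _).
by apply: eq_bigr => a _; rewrite ev_word.
Qed.

Hypothesis hK : [pchar K] =i pred0.

Lemma Z_e0 b b' : (b < r)%N -> in_ideal (E_rels K m) (tr b b' (e0 K n)).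
Proof.
move=> lt.
pose X := fscale (n%:R^-1 * m%:R)
  (fsum [seq fmul (e0 K m) (tr b b' (fword K (nseq c None))) | c <- iota 0 r]).
apply: (@in_ideal_equiv _ _ _ _ X).
  apply/fequivP => F; rewrite ev_tr ev_e0 /X ev_scale ev_fsum big_map.
  rewrite sum_iota_mul -mulrA; congr (_ * _).
  have -> : \sum_(a <- iota 0 m) \sum_(c <- iota 0 r) G b b' F (nseq (a * r + c)%N None)
     = \sum_(a <- iota 0 m) \sum_(c <- iota 0 r)
          G b b' (fun x => F (nseq a None ++ x)) (nseq c None).
    apply: eq_bigr => a _; apply: eq_bigr => c _.
    by rewrite nseqD (G_catS _ _ _ (run_nseq_mul a lt)).
  have -> : \sum_(c <- iota 0 r) ev F (fmul (e0 K m) (tr b b' (fword K (nseq c None))))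
     = m%:R^-1 * \sum_(c <- iota 0 r) \sum_(a <- iota 0 m)
          G b b' (fun x => F (nseq a None ++ x)) (nseq c None).
    rewrite mulr_sumr; apply: eq_bigr => c _.
    rewrite ev_mul (ev_ext _ (fun u => ev_tr _ _ _ _)) ev_e0.
    by congr (_ * _); apply: eq_bigr => a _; rewrite ev_word.
  have m0 : m%:R != 0 :> K.
    by move/(pcharf0P K): hK => ->; rewrite -lt0n.
  by rewrite mulrA divff // mul1r exchange_big.
apply: in_ideal_scale; apply: in_ideal_fsum => y /mapP [c _ ->].
by apply: in_ideal_rmul; apply: in_ideal_rel; rewrite /E_rels inE eqxx.
Qed.

Lemma ai_val (i : 'I_n) : val (ai i) = (i %/ r)%N.
Proof. by rewrite /= modn_small // ltn_divLR // (mulnC m r). Qed.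

Lemma ordS_caseA (i : 'I_n) : ((i %% r).+1 < r)%N ->
  ((ordS i) %% r)%N = (i %% r).+1 /\ ((ordS i) %/ r)%N = (i %/ r)%N.
Proof.
move=> lt; have Ei := divn_eq i r; set q := (i %/ r)%N in Ei *; set c := (i %% r)%N in Ei lt *.
have qm : (q < m)%N by rewrite /q ltn_divLR // (mulnC m r).
have iS : (i.+1 < n)%N.
  have : (q.+1 * r <= m * r)%N by rewrite leq_pmul2r.
  rewrite mulSn mulnC => h; rewrite Ei; lia.
have -> : ((ordS i) : nat) = (q * r + c.+1)%N by rewrite /= modn_small // Ei addnS.
by rewrite modnMDl divnMDl // modn_small // divn_small // addn0.
Qed.

Lemma ordS_caseB (i : 'I_n) : ((i %% r).+1 = r)%N ->
  ((ordS i) %% r)%N = 0%N /\ ((ordS i) %/ r)%N = ((i %/ r).+1 %% m)%N.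
Proof.
move=> eq; have Ei := divn_eq i r; set q := (i %/ r)%N in Ei *; set c := (i %% r)%N in Ei eq *.
have -> : ((ordS i) : nat) = ((q.+1 %% m) * r)%N.
  rewrite /= muln_modl (mulnC m r); congr (_ %% _)%N; by rewrite Ei -addnS eq mulSn addnC.
by rewrite modnMl mulnK.
Qed.

Lemma NT1 (i : 'I_n) : (((ordS i) %% r)%N == 0%N) = ((i %% r)%N == r.-1).
Proof.
have ltr : (i %% r < r)%N by rewrite ltn_mod.
case: (ltnP (i %% r).+1 r) => h.
  by have [-> _] := ordS_caseA h; case: eqP => ?; case: eqP => ? //; lia.
have e : (i %% r).+1 = r by lia.
by have [-> _] := ordS_caseB e; case: eqP => ?; case: eqP => ? //; lia.
Qed.

Lemma NT2 (i : 'I_n) : (i %% r)%N = r.-1 -> ai (ordS i) = ordS (ai i).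
Proof.
move=> h; have e : (i %% r).+1 = r by lia.
have [_ E] := ordS_caseB e.
apply: val_inj; rewrite /= E modn_mod; congr (_ %% _)%N.
by rewrite modn_small // ltn_divLR // (mulnC m r).
Qed.

Lemma NT3 (i : 'I_n) b1 : (b1.+1 < r)%N ->
  (((ordS i) %% r)%N == b1.+1) = ((i %% r)%N == b1).
Proof.
move=> lt; have ltr : (i %% r < r)%N by rewrite ltn_mod.
case: (ltnP (i %% r).+1 r) => h.
  by have [-> _] := ordS_caseA h; rewrite eqSS.
have e : (i %% r).+1 = r by lia.
by have [-> _] := ordS_caseB e; case: eqP => ?; case: eqP => ? //; lia.
Qed.

Lemma NT4 (i : 'I_n) : ((i %% r).+1 < r)%N -> ai (ordS i) = ai i.
Proof.
move=> h; have [_ E] := ordS_caseA h.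
by apply: val_inj; rewrite /= E.
Qed.

Lemma ai_inj (i j : 'I_n) : (i %% r)%N = (j %% r)%N -> ai i = ai j -> i = j.
Proof.
move=> e1 /(congr1 val); rewrite !ai_val => e2.
by apply: val_inj; rewrite /= (divn_eq i r) (divn_eq j r) e1 e2.
Qed.

Definition antirel k (i j : 'I_k) : falg K k :=
  fadd (fmul (gen_x K i) (gen_x K j)) (fmul (gen_x K j) (gen_x K i)).
Definition conjrel k (i : 'I_k) : falg K k :=
  fsub (fmul (gen_s K k) (gen_x K i)) (fmul (gen_x K (ordS i)) (gen_s K k)).

Lemma ev_anti k F (i j : 'I_k) : ev F (antirel i j) = F [:: Some i; Some j] + F [:: Some j; Some i].
Proof. by rewrite /antirel ev_add !ev_mul /gen_x !ev_word. Qed.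

Lemma ev_conj k F (i : 'I_k) : ev F (conjrel i) = F [:: None; Some i] - F [:: Some (ordS i); None].
Proof. by rewrite /conjrel ev_sub !ev_mul /gen_x /gen_s !ev_word. Qed.

Lemma G2 b b' F (i j : 'I_n) : G b b' F [:: Some i; Some j] =
  if [&& (i %% r == b)%N, (j %% r == b)%N & (b == b')%N]
  then F [:: Some (ai i); Some (ai j)] else 0.
Proof.
rewrite /G /=; case: (i %% r == b)%N => //=; case: (j %% r == b)%N => //=.
Qed.

Lemma Z_anti b b' (i j : 'I_n) : i != j -> (b < r)%N ->
  in_ideal (E_rels K m) (tr b b' (antirel i j)).
Proof.
move=> ij lt.
case H: [&& (i %% r == b)%N, (j %% r == b)%N & (b == b')%N].
  have H' : [&& (j %% r == b)%N, (i %% r == b)%N & (b == b')%N].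
    by move: H => /and3P [-> -> ->].
  apply: (@in_ideal_equiv _ _ _ _ (antirel (ai i) (ai j))).
    by apply/fequivP => F; rewrite ev_tr !ev_anti !G2 H H'.
  apply: in_ideal_rel; rewrite /E_rels /skew_rels !inE mem_cat.
  apply/orP; right; apply/orP; right; apply/orP; left.
  apply/mapP; exists (ai i, ai j) => //; rewrite mem_filter /=.
  apply/andP; split.
    apply/negP => /eqP e; move/negP: ij; apply; apply/eqP.
    by move: H => /and3P [/eqP e1 /eqP e2 _]; apply: ai_inj => //; rewrite e1 e2.
  by apply/allpairsP; exists (ai i, ai j); rewrite !mem_enum.
have H' : [&& (j %% r == b)%N, (i %% r == b)%N & (b == b')%N] = false.
  by apply/negbTE/negP => /and3P [a1 a2 a3]; move: H; rewrite a1 a2 a3.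
apply: (@in_ideal_equiv _ _ _ _ [::]); last exact: in_ideal_nil.
by apply/fequivP => F; rewrite ev_tr ev_anti ev_nil !G2 H H' addr0.
Qed.

Lemma Z_conj b b' (i : 'I_n) : (b < r)%N ->
  in_ideal (E_rels K m) (tr b b' (conjrel i)).
Proof.
move=> lt; case: b lt => [|b1] lt.
  case H: (((i %% r)%N == r.-1) && (r.-1 == b')%N).
    apply: (@in_ideal_equiv _ _ _ _ (conjrel (ai i))).
      apply/fequivP => F; rewrite ev_tr !ev_conj /G /=.
      move: H => /andP [/eqP h1 /eqP h2].
      rewrite NT1 h1 eqxx /= h2 eqxx NT2 //.
    apply: in_ideal_rel; rewrite /E_rels /skew_rels !inE mem_cat.
    apply/orP; right; apply/orP; right; apply/orP; right.
    by apply/mapP; exists (ai i) => //; rewrite mem_enum.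
  apply: (@in_ideal_equiv _ _ _ _ [::]); last exact: in_ideal_nil.
  apply/fequivP => F; rewrite ev_tr ev_conj ev_nil /G /= NT1.
  by case: ((i %% r)%N == r.-1) H => /= H; rewrite ?H subrr.
apply: (@in_ideal_equiv _ _ _ _ [::]); last exact: in_ideal_nil.
apply/fequivP => F; rewrite ev_tr ev_conj ev_nil /G /= NT3 //.
case: eqP => [h|_]; last by rewrite subrr.
by rewrite NT4 ?subrr // h.
Qed.

Lemma Z_rel rel : rel \in E_rels K n -> Zp rel.
Proof.
rewrite /E_rels /skew_rels !inE mem_cat.
case/orP => [/eqP -> | /orP [/eqP -> | /orP [H|H]]] b b' lt.
- exact: Z_e0.
- exact: Z_group.
- move/mapP: H => [ij]; rewrite mem_filter => /andP [ne _] ->.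
  exact: Z_anti.
- move/mapP: H => [i _ ->]; exact: Z_conj.
Qed.

Lemma Z_ideal g : in_ideal (E_rels K n) g -> Zp g.
Proof.
move=> [ts [al E]]; apply: (Z_equiv E); apply: Z_fsum => y /mapP [t tin ->].
apply: Z_rmul; apply: Z_lmul; apply: Z_rel; exact: (allP al t tin).
Qed.

Lemma xa_lt (a : 'I_m) : (a * r < n)%N.
Proof. by rewrite (mulnC r m) ltn_pmul2r. Qed.

Definition xa (a : 'I_m) : 'I_n := Ordinal (xa_lt a).

Definition psi_letter (l : letter m) : word n :=
  match l with Some a => [:: Some (xa a)] | None => nseq r None end.
Definition psi_word (w : word m) : word n := flatten (map psi_letter w).
Definition Psi (f : falg K m) : falg K n := [seq (p.1, psi_word p.2) | p <- f].

Lemma run_psi w : run 0 (psi_word w) = Some (0%N, w).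
Proof.
elim: w => [//|l w IH].
rewrite /psi_word /= run_cat -/(psi_word w).
have -> : run 0 (psi_letter l) = Some (0%N, [:: l]).
  case: l => [a|] /=; last exact: run_nseq_r.
  rewrite modnMl eqxx; congr (Some (_, [:: Some _])).
  by apply: val_inj; rewrite /= mulnK // modn_small.
by rewrite IH.
Qed.

Lemma ev_Psi F f : ev (G 0 0%N F) (Psi f) = ev F f.
Proof.
rewrite /ev /Psi big_map; apply: eq_bigr => p _ /=.
by rewrite /G run_psi eqxx.
Qed.

Lemma size_psi w : (size (psi_word w) <= r * size w)%N.
Proof.
elim: w => [|l w IH] //=.
rewrite /psi_word /= size_cat -/(psi_word w) mulnS leq_add //.
by case: l => [a|] /=; rewrite ?size_nseq.
Qed.

Lemma VN_Psi N f : in_VN N f -> in_VN (r * N) (Psi f).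
Proof.
move=> /allP H; apply/allP => p /mapP [p0 p0in ->] /=.
apply: leq_trans (size_psi _) _; rewrite leq_mul2l; apply/orP; right.
exact: (H p0 p0in).
Qed.

End Spec.

Lemma arith_step d q p q' p' r N : (0 < q)%N -> (0 < q')%N -> (p * q' < p' * q)%N -> (0 < N)%N ->
  (r ^ (p * q') <= N)%N -> (d ^ q <= (r * N) ^ p)%N -> (d ^ q' <= N ^ p')%N.
Proof.
move=> hq hq' hlt hN hrN hd.
rewrite -(leq_exp2r _ _ hq) -!expnM.
apply: (@leq_trans ((r * N) ^ (p * q'))).
  by rewrite mulnC expnM [X in (_ <= X)%N]expnM leq_exp2r.
apply: (@leq_trans (N ^ (p * q').+1)).
  by rewrite expnMn expnS leq_mul2r hrN orbT.
by rewrite leq_pexp2l // mulnC.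
Qed.


Theorem lemma3p7 (K : closedFieldType) (charK0 : [pchar K] =i pred0)
  (m n : nat) (hm : (2 <= m)%N) (hn : (2 <= n)%N) (hmn : (m %| n)%N) :
  gk_le K m n.
Proof.
move=> p q hq [N0 HB] p' q' hq' hlt.
move: HB; case/dvdnP: hmn hn => r -> hn HB.
have hm0 : (0 < m)%N by lia.
have hr : (0 < r)%N by rewrite lt0n; apply/eqP => r0; rewrite r0 mul0n in hn.
exists (maxn N0 (maxn 1 (r ^ (p * q')))) => N HN d [fs [hfs indep]].
have key : dim_ge K (r * m) (r * N) d.
  exists (fun i => @Psi K m r hr (fs i)); split.
    by move=> i; apply: VN_Psi.
  move=> c Hc; apply: indep.
  have Z := Z_ideal hm0 hr charK0 Hc 0%N hr.
  apply: in_ideal_equiv Z; apply/fequivP => F.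
  rewrite ev_tr !ev_fsum !big_map; apply: eq_bigr => i _.
  by rewrite !ev_scale ev_Psi.
have h1 : (N0 <= r * N)%N.
  apply: leq_trans (leq_pmull _ hr); apply: leq_trans HN; exact: leq_maxl.
have := HB (r * N)%N h1 d key.
apply: arith_step => //.
- apply: leq_trans HN; apply: leq_trans (leq_maxr _ _); exact: leq_maxl.
- apply: leq_trans HN; apply: leq_trans (leq_maxr _ _); exact: leq_maxr.
Qed.
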